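(* Let $0<a\le 1$. For every $\epsilon>0$ there is $c_1\in(\tfrac12,1)$ such that, for the two-phase marking scheme with parameter $c_1$ run alongside the biased random transpositions walk on $N$ cards, the first time $T_N$ at which all $N$ cards are marked satisfies $$P\Big(T_N>(1+\epsilon)\frac{1}{2a}N\log N\Big)=o(1)\quad\text{as }N\to\infty .$$
   Context: Biased random transpositions walk: $N=2n$ cards; $n$ are $a$-cards with weight $p(c)=a$ and $n$ are $b$-cards with weight $p(c)=b$, where $0<a\le1$, $b=2-a$. At each step $t$ two cards $R_t,L_t$ are chosen independently, each equal to card $c$ with probability $p(c)/N$, and their positions are exchanged (nothing if $R_t=L_t$). Two-phase marking scheme with parameter $c_1\in(\tfrac12,1)$, using auxiliary independent randomness; initially no card is marked; let $k$ be the number of marked cards at the start of step $t$. Phase 1 ($k<c_1N$): if $R_t$ and $L_t$ are both unmarked, mark $R_t$ with probability $\frac{a^2}{p(R_t)p(L_t)}$; otherwise do nothing. Phase 2 ($c_1N\le k<N$): assign to each unmarked card $u$ an ordered pair $(r(u),\ell(u))$ of marked cards such that $u\mapsto(r(u),\ell(u))$ is injective and at least one of $r(u),\ell(u)$ has the same type as $u$ (possible since $c_1>1/2$). Then: (1) if $R_t=L_t=u$ is unmarked, mark $u$ with probability $a/p(u)$; (2) if $R_t=u$ is unmarked and $L_t$ is marked, with probability $a/p(L_t)$ mark $u$, and otherwise move the mark from $L_t$ to $u$ (so $L_t$ becomes unmarked and $u$ marked); (3) symmetrically if $L_t=u$ is unmarked and $R_t$ marked, with probability $a/p(R_t)$ mark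 $u$, otherwise move the mark from $R_t$ to $u$; (4) if $(R_t,L_t)=(r(u),\ell(u))$ for an unmarked $u$, mark $u$ with probability $\frac{a\,p(u)}{p(R_t)p(L_t)}$; otherwise do nothing. The scheme ends when all cards are marked; $T_k$ is the first time $k$ cards are marked. *)

(* Defs.v *)
From mathcomp Require Import all_boot.
From Stdlib Require Import Reals.
Set Implicit Arguments. Unset Strict Implicit. Unset Printing Implicit Defensive.

(* Cards are 'I_(2*n): card i is an a-card iff i < n, otherwise a b-card. *)
Definition card_t (n : nat) := 'I_(2 * n).

Definition wt (n : nat) (a : R) (i : card_t n) : R :=
  if (i < n)%N then a else (2 - a)%R.

Definition same_type (n : nat) (i j : card_t n) : bool := (i < n)%N == (j < n)%N.

Definition ind (b : bool) : R := if b then 1%R else 0%R.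

(* An assignment rule for phase 2: given the current marked set S and an
   unmarked card u, the ordered pair (r(u), l(u)). *)
Definition assignment (n : nat) := {set card_t n} -> card_t n -> card_t n * card_t n.

Definition valid_assignment (n : nat) (c1 : R) (asg : assignment n) : Prop :=
  forall S : {set card_t n},
    (c1 * INR (2 * n) <= INR #|S|)%R -> (#|S| < 2 * n)%N ->
    (forall u v, u \notin S -> v \notin S -> asg S u = asg S v -> u = v) /\
    (forall u, u \notin S ->
        (asg S u).1 \in S /\ (asg S u).2 \in S /\
        (same_type u (asg S u).1 || same_type u (asg S u).2)).

Definition phase1_trans (n : nat) (a : R) (S : {set card_t n}) (r l : card_t n)
    (S' : {set card_t n}) : R :=
  if (r \notin S) && (l \notin S) then
    let q := (a * a / (wt a r * wt a l))%R in
    (q * ind (S' == r |: S) + (1 - q) * ind (S' == S))%R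
  else ind (S' == S).

Definition phase2_trans (n : nat) (a : R) (g : card_t n -> card_t n * card_t n)
    (S : {set card_t n}) (r l : card_t n) (S' : {set card_t n}) : R :=
  if (r \notin S) && (r == l) then
    let q := (a / wt a r)%R in
    (q * ind (S' == r |: S) + (1 - q) * ind (S' == S))%R
  else if (r \notin S) && (l \in S) then
    let q := (a / wt a l)%R in
    (q * ind (S' == r |: S) + (1 - q) * ind (S' == r |: (S :\ l)))%R
  else if (l \notin S) && (r \in S) then
    let q := (a / wt a r)%R in
    (q * ind (S' == l |: S) + (1 - q) * ind (S' == l |: (S :\ r)))%R
  else if (r \in S) && (l \in S) then
    match [pick u | (u \notin S) && (g u == (r, l))] with
    | Some u =>
        let q := (a * wt a u / (wt a r * wt a l))%R in
        (q * ind (S' == u |: S) + (1 - q) * ind (S' == S))%R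
    | None => ind (S' == S)
    end
  else ind (S' == S).

Definition mark_trans (n : nat) (a c1 : R) (asg : assignment n)
    (S : {set card_t n}) (r l : card_t n) (S' : {set card_t n}) : R :=
  if #|S| == 2 * n then ind (S' == S)
  else if Rlt_dec (INR #|S|) (c1 * INR (2 * n)) then phase1_trans a S r l S'
  else phase2_trans a (asg S) S r l S'.

(* One step of the law of the marked set: R_t, L_t independent, P(R_t = c) = p(c)/N. *)
Definition mark_step (n : nat) (a c1 : R) (asg : assignment n)
    (mu : {set card_t n} -> R) (S' : {set card_t n}) : R :=
  \big[Rplus/0%R]_(S : {set card_t n})
   \big[Rplus/0%R]_(r : card_t n)
    \big[Rplus/0%R]_(l : card_t n)
      (mu S * (wt a r / INR (2 * n)) * (wt a l / INR (2 * n))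
         * mark_trans a c1 asg S r l S')%R.

Fixpoint mark_law (n : nat) (a c1 : R) (asg : assignment n) (t : nat)
    : {set card_t n} -> R :=
  match t with
  | 0 => fun S => ind (S == set0)
  | t'.+1 => mark_step a c1 asg (mark_law a c1 asg t')
  end.

(* P(T_N > t) for integer t: not all cards marked after t steps. *)
Definition prob_not_done (n : nat) (a c1 : R) (asg : assignment n) (t : nat) : R :=
  \big[Rplus/0%R]_(S : {set card_t n} | S != setT) mark_law a c1 asg t S.

(* P(T_N > x) for real x >= 0 equals P(T_N > floor x). *)
Definition prob_T_gt (n : nat) (a c1 : R) (asg : assignment n) (x : R) : R :=
  prob_not_done a c1 asg (Z.to_nat (Int_part x)).

(* Main.v *)
From HB Require Import structures.
Require Import Defs.
From mathcomp Require Import all_boot.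
From Stdlib Require Import Reals Lra Lia.
Set Implicit Arguments. Unset Strict Implicit. Unset Printing Implicit Defensive.
Open Scope R_scope.
Notation ind := Defs.ind.
Lemma Rplus_0_l' : left_id 0%R Rplus. Proof. move=> x; lra. Qed.
HB.instance Definition _ := Monoid.isComLaw.Build R 0%R Rplus (fun x y z => esym (Rplus_assoc x y z)) Rplus_comm Rplus_0_l'.
Lemma Rm0l : left_zero 0%R Rmult. Proof. move=> x; lra. Qed.
Lemma Rm0r : right_zero 0%R Rmult. Proof. move=> x; lra. Qed.
HB.instance Definition _ := Monoid.isMulLaw.Build R 0%R Rmult Rm0l Rm0r.
Lemma Rdl : left_distributive Rmult Rplus. Proof. move=> x y z; lra. Qed.
Lemma Rdr : right_distributive Rmult Rplus. Proof. move=> x y z; lra. Qed.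
HB.instance Definition _ := Monoid.isAddLaw.Build R Rmult Rplus Rdl Rdr.

Notation "\sR_ ( i : T ) F" := (\big[Rplus/0%R]_(i : T) F) (at level 41, F at level 41, i, T at level 50).

Lemma sumR_le (T : finType) (F G : T -> R) :
  (forall i, F i <= G i) -> \big[Rplus/0]_(i : T) F i <= \big[Rplus/0]_(i : T) G i.
Proof. move=> H; apply: (big_ind2 (fun x y => x <= y)) => //; [lra| move=> *; lra]. Qed.

Lemma sumR_ge0 (T : finType) (F : T -> R) :
  (forall i, 0 <= F i) -> 0 <= \big[Rplus/0]_(i : T) F i.
Proof. move=> H; apply: (big_ind (fun x => 0 <= x)) => //; [lra| move=> *; lra]. Qed.

Lemma ind_ge0 b : 0 <= ind b. Proof. rewrite /ind; case: b; lra. Qed.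
Lemma ind_le1 b : ind b <= 1. Proof. rewrite /ind; case: b; lra. Qed.

Lemma sum_ind_eq (T : finType) (X : T) (f : T -> R) :
  \big[Rplus/0]_(S : T) (ind (S == X) * f S) = f X.
Proof.
rewrite (bigD1 X) //= eqxx big1 /ind /=; first lra.
by move=> i /negbTE ->; lra.
Qed.

Lemma sum_mix (T : finType) (X Y : T) (f : T -> R) q q' :
  \big[Rplus/0]_(S : T) ((q * ind (S == X) + q' * ind (S == Y)) * f S) = q * f X + q' * f Y.
Proof.
rewrite (eq_bigr (fun S => q * (ind (S == X) * f S) + q' * (ind (S == Y) * f S))); last by move=> i _; lra.
by rewrite big_split /= -!big_distrr /= !sum_ind_eq.
Qed.

Lemma iter_INR k : iter k (Rplus 1) 0 = INR k.
Proof. elim: k => [//|k IH]; rewrite iterS IH S_INR; lra. Qed.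

Lemma sum_ind_card (T : finType) (A : {pred T}) :
  \big[Rplus/0]_(i : T) ind (i \in A) = INR #|A|.
Proof. by rewrite -big_mkcond /= big_const iter_INR. Qed.

Lemma card_low n : #|[pred l : 'I_(2 * n) | (l < n)%nat]| = n.
Proof.
rewrite -sum1_card.
rewrite (big_mkcond (fun i => i \in _)) /=.
rewrite -(big_mkord xpredT (fun i => if (i < n)%nat then 1%nat else 0%nat)).
rewrite (big_cat_nat _ (n := n)) /=; [|by []|by rewrite leq_pmull].
rewrite [X in (_ + X)%nat]big1_seq; last first.
  by move=> i /andP[_]; rewrite mem_index_iota => /andP[Hi _]; rewrite ltnNge Hi.
rewrite addn0 big_nat_cond (eq_bigr (fun _ => 1%nat)); last by move=> i /andP[/andP[_ ->]].
by rewrite -big_nat_cond sum_nat_const_nat muln1 subn0.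
Qed.

Lemma sum_one n : \big[Rplus/0]_(l : card_t n) 1 = INR (2 * n).
Proof.
rewrite (eq_bigr (fun l => ind (l \in predT))) //.
by rewrite sum_ind_card cardT size_enum_ord.
Qed.

Lemma sum_low n : \big[Rplus/0]_(l : card_t n) ind (l < n)%nat = INR n.
Proof.
rewrite (eq_bigr (fun l => ind (l \in [pred l : 'I_(2 * n) | (l < n)%nat]))) //.
by rewrite sum_ind_card card_low.
Qed.

Lemma sum_high n : \big[Rplus/0]_(l : card_t n) ind (~~ (l < n)%nat) = INR n.
Proof.
have H : forall l : card_t n, ind (~~ (l < n)%nat) = 1 - ind (l < n)%nat.
  by move=> l; rewrite /ind; case: (l < n)%nat => /=; lra.
rewrite (eq_bigr _ (fun l _ => H l)).
have -> : \big[Rplus/0]_(l : card_t n) (1 - ind (l < n)%nat) =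
   \big[Rplus/0]_(l : card_t n) 1 + (-1) * \big[Rplus/0]_(l : card_t n) ind (l < n)%nat.
  by rewrite big_distrr -big_split /=; apply: eq_bigr => i _; lra.
rewrite sum_one sum_low mult_INR /=; lra.
Qed.

Lemma wt_split n a (l : card_t n) : wt a l = a * ind (l < n)%nat + (2 - a) * ind (~~ (l < n)%nat).
Proof. rewrite /wt /ind; case: (l < n)%nat => /=; lra. Qed.

Lemma sum_wt n a : \big[Rplus/0]_(l : card_t n) wt a l = INR (2 * n).
Proof.
rewrite (eq_bigr _ (fun l _ => wt_split a l)) big_split /= -!big_distrr /= sum_low sum_high.
rewrite mult_INR /=; lra.
Qed.

Lemma wt_ge n a (i : card_t n) : a <= 1 -> a <= wt a i.
Proof. rewrite /wt; case: (i < n)%nat; lra. Qed.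
Lemma wt_le n a (i : card_t n) : a <= 1 -> wt a i <= 2 - a.
Proof. rewrite /wt; case: (i < n)%nat; lra. Qed.

Section Law.
Variables (n : nat) (a c1 : R) (asg : assignment n).
Local Notation N := (INR (2 * n)).

Definition mt_exp (Psi : {set card_t n} -> R) S r l :=
  \big[Rplus/0]_(S' : {set card_t n}) (mark_trans a c1 asg S r l S' * Psi S').

Lemma law_exp (mu Psi : {set card_t n} -> R) :
  \big[Rplus/0]_(S' : {set card_t n}) (mark_step a c1 asg mu S' * Psi S') =
  \big[Rplus/0]_(S : {set card_t n}) (mu S * \big[Rplus/0]_(r : card_t n) \big[Rplus/0]_(l : card_t n)
     ((wt a r / N) * (wt a l / N) * mt_exp Psi S r l)).
Proof.
rewrite /mark_step /mt_exp.
under eq_bigr => S' _ do rewrite big_distrl /=.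
rewrite exchange_big /=; apply: eq_bigr => S _.
rewrite big_distrr /=.
under eq_bigr => S' _ do rewrite big_distrl /=.
rewrite exchange_big /=; apply: eq_bigr => r _.
rewrite big_distrr /=.
under eq_bigr => S' _ do rewrite big_distrl /=.
rewrite exchange_big /=; apply: eq_bigr => l _.
rewrite !big_distrr /=; apply: eq_bigr => S' _; lra.
Qed.
End Law.

Lemma mix_ge0 q b1 b2 : 0 <= q <= 1 -> 0 <= q * ind b1 + (1 - q) * ind b2.
Proof.
move=> [h1 h2]; have := ind_ge0 b1; have := ind_ge0 b2; nra.
Qed.

Lemma div_bounds x y : 0 <= x -> x <= y -> 0 < y -> 0 <= x / y <= 1.
Proof.
move=> h1 h2 h3; split.
- apply: Rmult_le_pos => //; apply: Rlt_le; exact: Rinv_0_lt_compat.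
- apply (Rmult_le_reg_r y) => //; rewrite /Rdiv Rmult_assoc Rinv_l; lra.
Qed.

Lemma same_type_wt n a (u v : card_t n) : same_type u v -> wt a u = wt a v.
Proof. by rewrite /same_type /wt => /eqP ->. Qed.

Lemma card_lt_full n (S : {set card_t n}) : #|S| != (2 * n)%nat -> (#|S| < 2 * n)%nat.
Proof.
move=> h; rewrite ltn_neqAle h /=.
by have := max_card S; rewrite card_ord.
Qed.

Lemma mark_trans_ge0 n a c1 (asg : assignment n) S r l S' :
  0 < a -> a <= 1 -> valid_assignment c1 asg -> 0 <= mark_trans a c1 asg S r l S'.
Proof.
move=> ha0 ha1 hv.
have wr := wt_ge r ha1; have wl := wt_ge l ha1.
rewrite /mark_trans; case: ifP => hfull; first exact: ind_ge0.
case: Rlt_dec => hph.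
- rewrite /phase1_trans; case: ifP => _; last exact: ind_ge0.
  apply: mix_ge0; apply: div_bounds; nra.
rewrite /phase2_trans.
case: ifP => _; first by apply: mix_ge0; apply: div_bounds; nra.
case: ifP => _; first by apply: mix_ge0; apply: div_bounds; nra.
case: ifP => _; first by apply: mix_ge0; apply: div_bounds; nra.
case: ifP => _; last exact: ind_ge0.
case: pickP => [u /andP[uS /eqP gu]|_]; last exact: ind_ge0.
have [_ H] := hv S (Rnot_lt_le _ _ hph) (card_lt_full (negbT hfull)).
have [_ [_ ]] := H u uS; rewrite gu /= => /orP[] /(same_type_wt a) e;
  apply: mix_ge0; apply: div_bounds; have := wt_ge u ha1; rewrite e; nra.
Qed.

Lemma mark_law_ge0 n a c1 (asg : assignment n) t S :
  0 < a -> a <= 1 -> valid_assignment c1 asg -> 0 <= mark_law a c1 asg t S.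
Proof.
move=> ha0 ha1 hv; elim: t S => [|t IH] S /=; first exact: ind_ge0.
rewrite /mark_step; apply: sumR_ge0 => S0; apply: sumR_ge0 => r; apply: sumR_ge0 => l.
have := IH S0; have := mark_trans_ge0 S0 r l S ha0 ha1 hv.
have := wt_ge r ha1; have := wt_ge l ha1.
have : 0 <= / INR (2 * n). 
  case: n asg S S0 r l hv IH => [|n'] *; first by rewrite /= Rinv_0; lra.
  apply: Rlt_le; apply: Rinv_0_lt_compat; apply: lt_0_INR; apply/ltP; by rewrite muln_gt0.
rewrite /Rdiv => *.
apply: Rmult_le_pos => //; apply: Rmult_le_pos; [apply: Rmult_le_pos|]; try apply: Rmult_le_pos; lra.
Qed.

Lemma aux_a a w c N k kb lam c1 : 0 < N -> 0 < a -> 0 <= c -> 0 <= w -> c1 * N <= k ->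
  c1 * N - N / 2 <= kb -> lam * w * N * N <= 2 * a * (a * w * c1 * N + c * (c1 * N - N / 2)) ->
  lam / 2 * w <= a / N * (a * w / N * k + 1 * c / N * kb).
Proof.
move=> hN ha hc hw hk hkb hl.
have h1 : a * w * c1 * N + c * (c1 * N - N / 2) <= a * w * k + c * kb.
  have : a * w * (c1 * N) <= a * w * k by apply: Rmult_le_compat_l => //; nra.
  have : c * (c1 * N - N / 2) <= c * kb by apply: Rmult_le_compat_l.
  lra.
have -> : lam / 2 * w = lam * w / 2 by field.
have -> : a / N * (a * w / N * k + 1 * c / N * kb) = (a * (a * w * k + c * kb)) / (N * N) by field; lra.
apply: (Rmult_le_reg_r (N * N)); first nra.
have -> : a * (a * w * k + c * kb) / (N * N) * (N * N) = a * (a * w * k + c * kb) by field; lra.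
have : a * (a * w * c1 * N + c * (c1 * N - N / 2)) <= a * (a * w * k + c * kb) by apply: Rmult_le_compat_l; lra.
lra.
Qed.
Lemma aux_b a N k lam c1 c kb : 0 < N -> 0 < a -> a <= 1 -> c1 * N <= k ->
  lam * N * N <= 2 * (2 - a) * a * c1 * N ->
  lam / 2 * 1 <= (2 - a) / N * (a * 1 / N * k + 0 * c / N * kb).
Proof.
move=> hN ha ha1 hk hl.
have -> : (2 - a) / N * (a * 1 / N * k + 0 * c / N * kb) = ((2 - a) * a * k) / (N * N) by field; lra.
apply: (Rmult_le_reg_r (N * N)); first nra.
have -> : (2 - a) * a * k / (N * N) * (N * N) = (2 - a) * a * k by field; lra.
have : (2 - a) * a * (c1 * N) <= (2 - a) * a * k by apply: Rmult_le_compat_l; nra.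
lra.
Qed.

Lemma aux_1 a N k c1 lam P t : 0 < N -> k < c1 * N -> c1 < 1 -> 0 <= P -> 0 <= t ->
  lam <= (1 - c1) ^ 2 * a ^ 2 * t ->
  lam * P <= (N - k) * ((N - k) * (a * a / (N * N) * (P * t))).
Proof.
move=> hN hk hc hP ht hl.
have h1 : (1 - c1) * N <= N - k by nra.
have h0 : 0 <= (1 - c1) * N by nra.
have h2 : ((1 - c1) * N) * ((1 - c1) * N) <= (N - k) * (N - k) by apply: Rmult_le_compat.
have -> : (N - k) * ((N - k) * (a * a / (N * N) * (P * t))) =
   ((N - k) * (N - k)) * (a * a * P * t) / (N * N) by field; lra.
have hPt : 0 <= a * a * P * t by apply: Rmult_le_pos => //; apply: Rmult_le_pos => //; nra.
apply: (Rle_trans _ (((1 - c1) * N) * ((1 - c1) * N) * (a * a * P * t) / (N * N))); last first.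
  apply: Rmult_le_compat_r; first by apply: Rlt_le; apply: Rinv_0_lt_compat; nra.
  by apply: Rmult_le_compat_r.
have -> : ((1 - c1) * N) * ((1 - c1) * N) * (a * a * P * t) / (N * N) = (1 - c1) ^ 2 * a ^ 2 * t * P.
  field; lra.
by apply: Rmult_le_compat_r.
Qed.

Lemma sum_in n (S : {set card_t n}) : \big[Rplus/0]_(l : card_t n) ind (l \in S) = INR #|S|.
Proof. exact: sum_ind_card. Qed.

Lemma sum_notin n (S : {set card_t n}) :
  \big[Rplus/0]_(l : card_t n) ind (l \notin S) = INR (2 * n) - INR #|S|.
Proof.
have H : forall l : card_t n, ind (l \notin S) = 1 + (-1) * ind (l \in S).
  by move=> l; rewrite /ind; case: (l \in S) => /=; lra.
rewrite (eq_bigr _ (fun l _ => H l)) big_split /= -big_distrr /= sum_one sum_in.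
simpl; lra.
Qed.

Lemma kb_bound n (S : {set card_t n}) :
  INR #|S| - INR n <= \big[Rplus/0]_(l : card_t n) (ind (l \in S) * ind (~~ (l < n)%nat)).
Proof.
have H : forall l : card_t n, ind (l \in S) =
   ind (l \in S) * ind (l < n)%nat + ind (l \in S) * ind (~~ (l < n)%nat).
  by move=> l; rewrite /ind; case: (l \in S); case: (l < n)%nat => /=; lra.
rewrite -sum_in (eq_bigr _ (fun l _ => H l)) big_split /= -sum_low.
have : \big[Rplus/0]_(l : card_t n) (ind (l \in S) * ind (l < n)%nat) <=
       \big[Rplus/0]_(l : card_t n) ind (l < n)%nat.
  apply: sumR_le => l; rewrite /ind; case: (l \in S); case: (l < n)%nat => /=; lra.
move=> hh; have aux : forall x y z, x <= z -> x + y - z <= y by move=> *; lra.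
exact: aux hh.
Qed.

Lemma sum_P n a : (0 < n)%nat ->
  \big[Rplus/0]_(l : card_t n) (wt a l / INR (2 * n)) = 1.
Proof.
move=> hn; have hN : 0 < INR (2 * n) by apply: lt_0_INR; apply/ltP; rewrite muln_gt0.
rewrite -big_distrl /= sum_wt; field; lra.
Qed.

Lemma dsum_bound n a (F D : card_t n -> card_t n -> R) K : (0 < n)%nat -> 0 < a -> a <= 1 ->
  (forall r l, F r l <= K - D r l) ->
  \big[Rplus/0]_(r : card_t n) \big[Rplus/0]_(l : card_t n)
     (wt a r / INR (2 * n) * (wt a l / INR (2 * n)) * F r l) <=
  K - \big[Rplus/0]_(r : card_t n) \big[Rplus/0]_(l : card_t n)
     (wt a r / INR (2 * n) * (wt a l / INR (2 * n)) * D r l).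
Proof.
move=> hn ha0 ha1 H.
have hN : 0 < INR (2 * n) by apply: lt_0_INR; apply/ltP; rewrite muln_gt0.
have hP : forall l : card_t n, 0 <= wt a l / INR (2 * n).
  move=> l; apply: Rmult_le_pos; [have := wt_ge l ha1; lra|apply: Rlt_le; exact: Rinv_0_lt_compat].
apply: (Rle_trans _ (\big[Rplus/0]_(r : card_t n) \big[Rplus/0]_(l : card_t n)
     (wt a r / INR (2 * n) * (wt a l / INR (2 * n)) * (K - D r l)))).
  apply: sumR_le => r; apply: sumR_le => l; apply: Rmult_le_compat_l => //.
  by apply: Rmult_le_pos.
have E : forall r l : card_t n, wt a r / INR (2 * n) * (wt a l / INR (2 * n)) * (K - D r l) =
   K * (wt a r / INR (2 * n) * (wt a l / INR (2 * n))) +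
   (-1) * (wt a r / INR (2 * n) * (wt a l / INR (2 * n)) * D r l).
  move=> r l; lra.
under eq_bigr => r _ do rewrite (eq_bigr _ (fun l _ => E r l)) big_split /= -!big_distrr /=.
rewrite big_split /= -!big_distrr /=.
under eq_bigr => r _ do rewrite sum_P // Rmult_1_r.
rewrite sum_P //.
have aux : forall x, K * 1 + -1 * x <= K - x by move=> *; lra.
exact: aux.
Qed.

Section Pot.
Variables (n : nat) (a c1 w C : R) (asg : assignment n).
Local Notation N := (INR (2 * n)).
Definition wu (u : card_t n) : R := if (u < n)%nat then w else 1.
Definition Phi (S : {set card_t n}) : R :=
  \big[Rplus/0]_(u : card_t n) (ind (u \notin S) * wu u).
Definition rho := 1 + C / N.
Definition Psi (S : {set card_t n}) : R :=
  if Rlt_dec (INR #|S|) (c1 * N) then (w * N) * rho ^ (2 * n - #|S|) else Phi S.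

Hypothesis hw : 1 <= w.
Lemma wu_ge1 u : 1 <= wu u. Proof. rewrite /wu; case: (u < n)%nat; lra. Qed.
Lemma wu_le u : wu u <= w. Proof. rewrite /wu; case: (u < n)%nat; lra. Qed.

Lemma Phi_U1 (r : card_t n) (S : {set card_t n}) : r \notin S -> Phi (r |: S) = Phi S - wu r.
Proof.
move=> rS; rewrite /Phi (bigD1 r) //= [X in _ = X - _](bigD1 r) //= setU11 rS /ind /=.
have -> : \big[Rplus/0]_(i | i != r) ((if i \notin r |: S then 1 else 0) * wu i) =
          \big[Rplus/0]_(i | i != r) ((if i \notin S then 1 else 0) * wu i).
  by apply: eq_bigr => i /negbTE ir; rewrite in_setU1 ir.
rewrite Rmult_0_l Rmult_1_l Rplus_0_l Rplus_comm /Rminus Rplus_assoc Rplus_opp_r Rplus_0_r; reflexivity.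
Qed.

Lemma Phi_D1 (l : card_t n) (S : {set card_t n}) : l \in S -> Phi (S :\ l) = Phi S + wu l.
Proof.
move=> lS; rewrite /Phi (bigD1 l) //= [X in _ = X + _](bigD1 l) //= setD11 lS /ind /=.
have -> : \big[Rplus/0]_(i | i != l) ((if i \notin S :\ l then 1 else 0) * wu i) =
          \big[Rplus/0]_(i | i != l) ((if i \notin S then 1 else 0) * wu i).
  by apply: eq_bigr => i /negbTE ir; rewrite in_setD1 ir.
rewrite Rmult_0_l Rmult_1_l Rplus_0_l Rplus_comm; reflexivity.
Qed.

Lemma Phi_ge0 (S : {set card_t n}) : 0 <= Phi S.
Proof. apply: sumR_ge0 => u; apply: Rmult_le_pos; [exact: ind_ge0| have := wu_ge1 u; lra]. Qed.

Lemma Phi_le (S : {set card_t n}) : Phi S <= w * N.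
Proof.
rewrite -sum_one big_distrr /=; apply: sumR_le => u.
have aux : forall x y, 0 <= x <= 1 -> 1 <= y <= w -> x * y <= w * 1 by move=> x y *; nra.
apply: aux; split; [exact: ind_ge0|exact: ind_le1|exact: wu_ge1|exact: wu_le].
Qed.

Lemma Phi_ge1 (S : {set card_t n}) : S != setT -> 1 <= Phi S.
Proof.
move=> hS; case: (pickP (fun u => u \notin S)) => [u uS|H]; last first.
  by case/eqP: hS; apply/setP => u; rewrite inE; move: (H u) => /= /negbFE.
rewrite /Phi (bigD1 u) //= uS /ind /=.
have aux : forall x y, 1 <= x -> 0 <= y -> 1 <= 1 * x + y by move=> x y *; lra.
apply: aux; first exact: wu_ge1.
apply: (big_ind (fun x => 0 <= x)) => //; [lra| move=> *; lra|].
by move=> i _; have := wu_ge1 i; case: (i \notin S) => /=; lra.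
Qed.

Hypothesis hC : 0 <= C.
Hypothesis hn : (0 < n)%nat.
Lemma N_pos : 0 < N. Proof. by apply: lt_0_INR; apply/ltP; rewrite muln_gt0. Qed.
Lemma rho_ge1 : 1 <= rho.
Proof.
rewrite /rho.
have h : 0 <= C / N.
  apply: Rmult_le_pos => //; apply: Rlt_le; apply: Rinv_0_lt_compat; exact: N_pos.
lra.
Qed.
Lemma N_ge1 : 1 <= N.
Proof. have -> : 1 = INR 1 by []. apply: le_INR; apply/leP; by rewrite muln_gt0. Qed.

Lemma aux3 x y z : 1 <= x -> 1 <= y -> 1 <= z -> 1 <= x * y * z.
Proof.
move=> h1 h2 h3; have h4 : 1 <= x * y by nra. nra.
Qed.

Lemma Psi_ge0 (S : {set card_t n}) : 0 <= Psi S.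
Proof.
rewrite /Psi; case: Rlt_dec => hh; last exact: Phi_ge0.
apply: (Rle_trans _ 1); first lra.
exact: (aux3 hw N_ge1 (pow_R1_Rle _ (2 * n - #|S|) rho_ge1)).
Qed.

Lemma Psi_ge1 (S : {set card_t n}) : S != setT -> 1 <= Psi S.
Proof.
move=> hS; rewrite /Psi; case: Rlt_dec => hh; last exact: Phi_ge1.
exact: (aux3 hw N_ge1 (pow_R1_Rle _ (2 * n - #|S|) rho_ge1)).
Qed.

Lemma Psi_ph2 (S : {set card_t n}) : ~ (INR #|S| < c1 * N) -> Psi S = Phi S.
Proof. by rewrite /Psi; case: Rlt_dec. Qed.

Hypothesis ha0 : 0 < a.
Hypothesis ha1 : a <= 1.

Definition hgain (u v : card_t n) := wu u - (1 - a / wt a v) * wu v.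
Definition Gain (S : {set card_t n}) (r l : card_t n) :=
  ind (r \notin S) * ind (l \in S) * hgain r l + ind (l \notin S) * ind (r \in S) * hgain l r.

Lemma not_ph1_mono (S X : {set card_t n}) :
  ~ (INR #|S| < c1 * N) -> (#|S| <= #|X|)%nat -> ~ (INR #|X| < c1 * N).
Proof. move=> h1 /leP/le_INR h2 h3; apply: h1; lra. Qed.

Lemma q_ge0 (x : card_t n) : 0 <= a / wt a x.
Proof.
apply: Rmult_le_pos; first lra.
apply: Rlt_le; apply: Rinv_0_lt_compat; have := wt_ge x ha1; lra.
Qed.

Lemma mt_ph2 (S : {set card_t n}) (r l : card_t n) :
  ~ (INR #|S| < c1 * N) -> #|S| != (2 * n)%nat ->
  mt_exp a c1 asg Psi S r l <= Phi S - Gain S r l.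
Proof.
move=> hph hfull.
rewrite /mt_exp /mark_trans (negbTE hfull) /=.
case: Rlt_dec => [hh|hh]; first by case: (hph hh).
rewrite /phase2_trans /Gain.
have PsiS := Psi_ph2 hph.
case rS: (r \in S); case lS: (l \in S) => /=.
- case: pickP => [u /andP[uS /eqP gu]|_] /=; last first.
    rewrite sum_ind_eq PsiS /ind /=; lra.
  rewrite sum_mix PsiS Psi_ph2; last first.
    by apply: (not_ph1_mono hph); rewrite cardsU1 uS.
  rewrite Phi_U1 // /ind /=.
  have hq : 0 <= a * wt a u / (wt a r * wt a l).
    have := wt_ge u ha1; have := wt_ge r ha1; have := wt_ge l ha1 => *.
    apply: Rmult_le_pos; first nra.
    apply: Rlt_le; apply: Rinv_0_lt_compat; nra.
  have := wu_ge1 u; nra.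
- have rl : (r == l) = false by apply/eqP => e; rewrite e lS in rS.
  rewrite sum_mix !Psi_ph2; first last.
  + by apply: (not_ph1_mono hph); rewrite cardsU1 lS.
  + apply: (not_ph1_mono hph).
    by rewrite cardsU1 in_setD1 lS andbF add1n (cardsD1 r S) rS.
  rewrite (Phi_U1 (S := S :\ r)); last by rewrite in_setD1 lS andbF.
  rewrite Phi_D1 // Phi_U1 ?lS // /ind /= /hgain.
  lra.
- have rl : (r == l) = false by apply/eqP => e; rewrite e lS in rS.
  rewrite rl /= sum_mix !Psi_ph2; first last.
  + by apply: (not_ph1_mono hph); rewrite cardsU1 rS.
  + apply: (not_ph1_mono hph).
    by rewrite cardsU1 in_setD1 rS andbF add1n (cardsD1 l S) lS.
  rewrite (Phi_U1 (S := S :\ l)); last by rewrite in_setD1 rS andbF.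
  rewrite Phi_D1 // Phi_U1 ?rS // /ind /= /hgain.
  lra.
- case: (r == l) => /=.
  + rewrite sum_mix PsiS Psi_ph2; last by apply: (not_ph1_mono hph); rewrite cardsU1 rS.
    rewrite Phi_U1 ?rS // /ind /=.
    have := q_ge0 r; have := wu_ge1 r; nra.
  + rewrite sum_ind_eq PsiS /ind /=; lra.
Qed.

Lemma ph1_card (S : {set card_t n}) : c1 < 1 -> INR #|S| < c1 * N -> (#|S| < 2 * n)%nat.
Proof.
move=> hc h; have hN := N_pos.
have : INR #|S| < INR (2 * n) by nra.
by move/INR_lt/ltP.
Qed.

Lemma Psi_next (S : {set card_t n}) (r : card_t n) : c1 < 1 ->
  INR #|S| < c1 * N -> r \notin S -> Psi (r |: S) <= Psi S * / rho.
Proof.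
move=> hc hph rS.
have hk := ph1_card hc hph.
have hr := rho_ge1.
have e : (2 * n - #|S| = (2 * n - #|r |: S|).+1)%nat by rewrite cardsU1 rS add1n subnSK.
have hpow : rho ^ (2 * n - #|S|) = rho * rho ^ (2 * n - #|r |: S|) by rewrite e.
have key : w * N * rho ^ (2 * n - #|S|) * / rho = w * N * rho ^ (2 * n - #|r |: S|).
  rewrite hpow; field; lra.
rewrite {2}/Psi; case: Rlt_dec => hh /=; last by case: (hh hph).
rewrite key /Psi; case: Rlt_dec => hh2 /=; first exact: Rle_refl.
apply: (Rle_trans _ (w * N)); first exact: Phi_le.
have := pow_R1_Rle _ (2 * n - #|r |: S|) hr; have := N_ge1 => *.
have aux : forall x y, 1 <= y -> 1 <= x -> x <= x * y by move=> x y *; nra.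
apply: aux => //.
have hN1 := N_ge1; nra.
Qed.

Lemma mt_ph1 (S : {set card_t n}) (r l : card_t n) : c1 < 1 ->
  INR #|S| < c1 * N ->
  mt_exp a c1 asg Psi S r l <=
    Psi S - ind (r \notin S) * ind (l \notin S) * (a * a / (wt a r * wt a l)) * (Psi S * (1 - / rho)).
Proof.
move=> hc hph.
have hk := ph1_card hc hph.
have hfull : #|S| != (2 * n)%nat by rewrite neq_ltn hk.
rewrite /mt_exp /mark_trans (negbTE hfull) /=.
case: Rlt_dec => [hh|hh]; last by case: (hh hph).
rewrite /phase1_trans.
case rS: (r \in S); case lS: (l \in S) => /=; try by rewrite sum_ind_eq /ind /=; lra.
rewrite sum_mix /ind /=.
have hq : 0 <= a * a / (wt a r * wt a l).
  have := wt_ge r ha1; have := wt_ge l ha1 => *.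
  apply: Rmult_le_pos; first nra.
  apply: Rlt_le; apply: Rinv_0_lt_compat; nra.
have := Psi_next hc hph (negbT rS).
set q := a * a / (wt a r * wt a l).
set P1 := Psi (r |: S). set P0 := Psi S. set ir := / rho.
move=> h; have : q * P1 <= q * (P0 * ir) by apply: Rmult_le_compat_l.
lra.
Qed.


Lemma Psi_full (S : {set card_t n}) : c1 < 1 -> #|S| = (2 * n)%nat -> Psi S = 0.
Proof.
move=> hc hS.
have hST : S = setT.
  apply/eqP; rewrite eqEcard subsetT cardsT card_ord hS leqnn //.
have hN := N_pos.
rewrite Psi_ph2; last by rewrite hS; nra.
rewrite /Phi big1 // => u _; rewrite hST inE /ind /=; lra.
Qed.

Lemma hgain_eq (r l : card_t n) :
  wt a l / N * hgain r l = (a * wu r + ind (r < n)%nat * ind (~~ (l < n)%nat) * ((2 - 2 * a) * (w - 1))) / N.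
Proof.
have hN := N_pos.
rewrite /hgain /wu /wt /ind; case: (r < n)%nat; case: (l < n)%nat => /=; field; lra.
Qed.

Lemma contraction (S : {set card_t n}) lam : /2 < c1 -> c1 < 1 ->
  lam <= (1 - c1) ^ 2 * a ^ 2 * (1 - / rho) ->
  lam * w * N * N <= 2 * a * (a * w * c1 * N + (2 - 2 * a) * (w - 1) * (c1 * N - N / 2)) ->
  lam * N * N <= 2 * (2 - a) * a * c1 * N ->
  \big[Rplus/0]_(r : card_t n) \big[Rplus/0]_(l : card_t n)
     (wt a r / N * (wt a l / N) * mt_exp a c1 asg Psi S r l) <= (1 - lam) * Psi S.
Proof.
move=> hc2 hc hL1 hL2a hL2b.
have hN := N_pos.
have hwt : forall x : card_t n, a <= wt a x := fun x => wt_ge x ha1.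
case: (boolP (#|S| == (2 * n)%nat)) => [/eqP hfull|hfull].
  rewrite (Psi_full hc hfull).
  apply: Rle_trans.
    apply: (dsum_bound (D := fun _ _ => 0) (K := 0)) => // r l.
    rewrite /mt_exp /mark_trans hfull eqxx /= sum_ind_eq (Psi_full hc hfull); lra.
  rewrite (eq_bigr (fun _ => 0)); last by move=> r _; rewrite big1 // => l _; lra.
  rewrite big1 //; lra.
case: (Rlt_dec (INR #|S|) (c1 * N)) => hph.
-
  set D := fun r l : card_t n => ind (r \notin S) * ind (l \notin S) * (a * a / (wt a r * wt a l)) *
            (Psi S * (1 - / rho)).
  apply: Rle_trans; first by apply: (dsum_bound (D := D)) => // r l; exact: mt_ph1.
  suff : lam * Psi S <= \big[Rplus/0]_(r : card_t n) \big[Rplus/0]_(l : card_t n)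
      (wt a r / N * (wt a l / N) * D r l).
    move=> h.
    have aux2 : forall x y z, x * z <= y -> z - y <= (1 - x) * z by move=> *; lra.
    exact: aux2 h.
  have E : forall r l : card_t n, wt a r / N * (wt a l / N) * D r l =
      ind (r \notin S) * (ind (l \notin S) * (a * a / (N * N) * (Psi S * (1 - / rho)))).
    move=> r l; rewrite /D; have := hwt r; have := hwt l; have := rho_ge1 => *; field; repeat split; lra.
  under eq_bigr => r _ do rewrite (eq_bigr _ (fun l _ => E r l)) -big_distrr /= -big_distrl /= sum_notin.
  rewrite -big_distrl /= sum_notin.
  apply: (aux_1 (c1 := c1)) => //.
  + exact: Psi_ge0.
  + have hr1 := rho_ge1.
    have h : 0 < rho by have := rho_ge1; lra.
    have : / rho <= 1.
      rewrite -Rinv_1; apply: Rinv_le_contravar; lra.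
    lra.
-
  apply: Rle_trans; first by apply: (dsum_bound (D := Gain S)) => // r l; exact: mt_ph2.
  rewrite Psi_ph2 //.
  suff : lam * Phi S <= \big[Rplus/0]_(r : card_t n) \big[Rplus/0]_(l : card_t n)
      (wt a r / N * (wt a l / N) * Gain S r l).
    have aux2 : forall x y z, x * z <= y -> z - y <= (1 - x) * z by move=> *; lra.
    move=> h; exact: aux2 h.
  set X := fun r l : card_t n => ind (r \notin S) * ind (l \in S) * hgain r l.
  have EG : forall r l, Gain S r l = X r l + X l r by [].
  under eq_bigr => r _ do under eq_bigr => l _ do rewrite EG Rmult_plus_distr_l.
  under eq_bigr => r _ do rewrite big_split /=.
  rewrite big_split /=.
  rewrite [X in _ <= _ + X]exchange_big /=.
  rewrite [X in _ <= _ + X](eq_bigr (fun l => \big[Rplus/0]_(r : card_t n)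
      (wt a l / N * (wt a r / N) * X l r))); last first.
    by move=> l _; apply: eq_bigr => r _; rewrite (Rmult_comm (wt a r / N)).
  set A := \big[Rplus/0]_(l : card_t n) _.
  suff : lam * Phi S <= 2 * A.
    move=> h; apply: (Rle_trans _ _ _ h); apply: Req_le.
    rewrite /A; simpl; lra.
  have EA : A = \big[Rplus/0]_(r : card_t n) (ind (r \notin S) * (wt a r / N *
      \big[Rplus/0]_(l : card_t n) (ind (l \in S) * (wt a l / N * hgain r l)))).
    rewrite /A; apply: eq_bigr => r _; rewrite !big_distrr /=; apply: eq_bigr => l _.
    rewrite /X; have aux : forall p q x y h : R, p * q * (x * y * h) = x * (p * (y * (q * h))) by move=> *; ring.
    exact: aux.
  rewrite EA /Phi big_distrr big_distrr /=.
  apply: sumR_le => r.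
  have Hi := ind_ge0 (r \notin S).
  suff : lam / 2 * wu r <= wt a r / N *
      \big[Rplus/0]_(l : card_t n) (ind (l \in S) * (wt a l / N * hgain r l)).
    move=> h.
    have aux : forall x y z, 0 <= x -> lam / 2 * y <= z -> lam * (x * y) <= 2 * (x * z).
      by move=> x y z hx hyz; nra.
    exact: aux.
  rewrite (eq_bigr (fun l => (a * wu r / N) * ind (l \in S) +
     (ind (r < n)%nat * ((2 - 2 * a) * (w - 1)) / N) * (ind (l \in S) * ind (~~ (l < n)%nat)))); last first.
    move=> l _; rewrite hgain_eq.
    have aux : forall x A y z c N, N <> 0 -> x * ((A + y * z * c) / N) = (A / N) * x + (y * c / N) * (x * z).
      by move=> * ; field.
    apply: aux; lra.
  rewrite big_split /= -!big_distrr /= sum_in.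
  have hk : c1 * N <= INR #|S| by lra.
  have hkb : c1 * N - N / 2 <= \big[Rplus/0]_(l : card_t n) (ind (l \in S) * ind (~~ (l < n)%nat)).
    apply: Rle_trans (kb_bound S).
    have : N = 2 * INR n by rewrite mult_INR.
    lra.
  move: hkb; set kb := \big[Rplus/0]_(l : card_t n) _ => hkb.
  rewrite /wu /wt /ind; case: (r < n)%nat => /=.
  + apply: (aux_a (c1 := c1)) => //; try lra; apply: Rmult_le_pos; lra.
  + apply: (aux_b (c1 := c1) (a := a) (N := N) (k := INR #|S|)) => //; lra.
Qed.
End Pot.

Lemma iterate n a c1 w C (asg : assignment n) lam :
  1 <= w -> 0 <= C -> (0 < n)%nat -> 0 < a -> a <= 1 -> valid_assignment c1 asg ->
  /2 < c1 -> c1 < 1 ->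
  lam <= (1 - c1) ^ 2 * a ^ 2 * (1 - / rho n C) ->
  lam * w * INR (2 * n) * INR (2 * n) <= 2 * a * (a * w * c1 * INR (2 * n) +
     (2 - 2 * a) * (w - 1) * (c1 * INR (2 * n) - INR (2 * n) / 2)) ->
  lam * INR (2 * n) * INR (2 * n) <= 2 * (2 - a) * a * c1 * INR (2 * n) ->
  lam <= 1 ->
  forall t, \big[Rplus/0]_(S : {set card_t n}) (mark_law a c1 asg t S * Psi c1 w C S)
     <= (1 - lam) ^ t * @Psi n c1 w C set0.
Proof.
move=> hw hC hn ha0 ha1 hv hc2 hc hL1 hL2a hL2b hl1.
elim=> [|t IH].
  rewrite /= sum_ind_eq Rmult_1_l; exact: Rle_refl.
rewrite /= law_exp.
apply: (Rle_trans _ (\big[Rplus/0]_(S : {set card_t n}) (mark_law a c1 asg t S * ((1 - lam) * Psi c1 w C S)))).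
  apply: sumR_le => S; apply: Rmult_le_compat_l; first exact: mark_law_ge0.
  exact: contraction.
rewrite (eq_bigr (fun S => (1 - lam) * (mark_law a c1 asg t S * Psi c1 w C S))); last first.
  move=> S _; have aux : forall x y z : R, x * (y * z) = y * (x * z) by move=> *; ring.
  exact: aux.
rewrite -big_distrr /= Rmult_assoc; apply: Rmult_le_compat_l => //; lra.
Qed.

Lemma prob_le n a c1 w C (asg : assignment n) t :
  1 <= w -> 0 <= C -> (0 < n)%nat -> 0 < a -> a <= 1 -> valid_assignment c1 asg ->
  prob_not_done a c1 asg t <=
  \big[Rplus/0]_(S : {set card_t n}) (mark_law a c1 asg t S * Psi c1 w C S).
Proof.
move=> hw hC hn ha0 ha1 hv.
rewrite /prob_not_done big_mkcond /=; apply: sumR_le => S; case: ifP => hS.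
- have aux : forall x y, 0 <= x -> 1 <= y -> x <= x * y by move=> *; nra.
  apply: aux; first exact: mark_law_ge0.
  exact: Psi_ge1.
- apply: Rmult_le_pos; [exact: mark_law_ge0|exact: Psi_ge0].
Qed.

Lemma exp_pow x k : exp x ^ k = exp (INR k * x).
Proof.
elim: k => [|k IH]; first by rewrite /= Rmult_0_l exp_0.
change (exp x * exp x ^ k = exp (INR k.+1 * x)); rewrite IH -exp_plus S_INR; f_equal; ring.
Qed.

Lemma exp_le x y : x <= y -> exp x <= exp y.
Proof. case=> h; [apply: Rlt_le; exact: exp_increasing| rewrite h; exact: Rle_refl]. Qed.

Lemma Psi0_bound n c1 w C : (0 < n)%nat -> 0 < c1 -> 0 < C -> 0 <= w ->
  @Psi n c1 w C set0 <= w * INR (2 * n) * exp C.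
Proof.
move=> hn hc hC hw.
have hN : 0 < INR (2 * n) by apply: lt_0_INR; apply/ltP; rewrite muln_gt0.
rewrite /Psi cards0 subn0; case: Rlt_dec => h /=; last by case: h; rewrite /=; nra.
apply: Rmult_le_compat_l; first nra.
have hx : 0 < C / INR (2 * n) by apply: Rdiv_pos_pos.
apply: (Rle_trans _ (exp (C / INR (2 * n)) ^ (2 * n))).
  apply: pow_incr; rewrite /rho; split; first lra.
  have := exp_ineq1_le (C / INR (2 * n)); lra.
rewrite exp_pow; apply: Req_le; f_equal; field; lra.
Qed.

Definition dlt eps := eps / (2 * (1 + eps)).
Definition c1v eps := 1 - dlt eps / 4.
Definition wv eps := 2 / dlt eps.
Definition Cv a eps := 4 / ((1 - c1v eps) ^ 2 * a).

Lemma dlt_bounds eps : 0 < eps -> 0 < dlt eps < /2.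
Proof.
move=> he; rewrite /dlt; split.
  apply: Rdiv_pos_pos; lra.
apply: (Rmult_lt_reg_r (2 * (1 + eps))); first lra.
rewrite /Rdiv Rmult_assoc Rinv_l; last lra.
lra.
Qed.

Lemma L1_aux a c1 N lam : 0 < a -> c1 < 1 -> 0 < N ->
  4 / ((1 - c1) ^ 2 * a) <= N -> lam <= 2 * a / N ->
  lam <= (1 - c1) ^ 2 * a ^ 2 * (1 - / (1 + 4 / ((1 - c1) ^ 2 * a) / N)).
Proof.
move=> ha hc hN hCN hl.
set C := 4 / ((1 - c1) ^ 2 * a).
have hd : 0 < (1 - c1) ^ 2 * a by apply: Rmult_lt_0_compat => //; apply: pow_lt; lra.
have hC : 0 < C by apply: Rdiv_pos_pos; lra.
have -> : (1 - c1) ^ 2 * a ^ 2 * (1 - / (1 + C / N)) = 4 * a / (N + C).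
  rewrite /C; field; repeat split; try lra.
  have : 0 < (1 - c1) ^ 2 * a * N + 4 by nra. lra.
apply: (Rle_trans _ _ _ hl).
apply: (Rmult_le_reg_r (N * (N + C))); first nra.
have -> : 2 * a / N * (N * (N + C)) = 2 * a * (N + C) by field; lra.
have -> : 4 * a / (N + C) * (N * (N + C)) = 4 * a * N by field; lra.
have hCN2 : C <= N by exact: hCN.
nra.
Qed.

Lemma L2a_aux a d N lam : 0 < a -> a <= 1 -> 0 < d < /2 -> 0 < N -> lam = 2 * a * (1 - d) / N ->
  lam * (2 / d) * N * N <= 2 * a * (a * (2 / d) * (1 - d / 4) * N +
     (2 - 2 * a) * ((2 / d) - 1) * ((1 - d / 4) * N - N / 2)).
Proof.
move=> ha ha1 hd hN ->.
have e : 2 * a * (a * (2 / d) * (1 - d / 4) * N + (2 - 2 * a) * ((2 / d) - 1) * ((1 - d / 4) * N - N / 2))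
   - 2 * a * (1 - d) / N * (2 / d) * N * N = 2 * a * N * (1 + a / 2 - (1 - a) * (1 - d / 2)).
  field; lra.
have : 0 <= 2 * a * N * (1 + a / 2 - (1 - a) * (1 - d / 2)).
  apply: Rmult_le_pos; first nra.
  nra.
lra.
Qed.

Lemma L2b_aux a d N lam : 0 < a -> a <= 1 -> 0 < d < /2 -> 0 < N -> lam = 2 * a * (1 - d) / N ->
  lam * N * N <= 2 * (2 - a) * a * (1 - d / 4) * N.
Proof.
move=> ha ha1 hd hN ->.
have -> : 2 * a * (1 - d) / N * N * N = 2 * a * (1 - d) * N by field; lra.
have : (1 - d) <= (2 - a) * (1 - d / 4) by nra.
move=> h; have : 2 * a * N * (1 - d) <= 2 * a * N * ((2 - a) * (1 - d / 4)).
  apply: Rmult_le_compat_l => //; nra.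
lra.
Qed.

Lemma final_bound n a eps (asg : assignment n) :
  0 < a -> a <= 1 -> 0 < eps -> valid_assignment (c1v eps) asg ->
  Cv a eps <= INR (2 * n) -> 2 <= INR (2 * n) ->
  0 <= prob_T_gt a (c1v eps) asg ((1 + eps) * / (2 * a) * INR (2 * n) * ln (INR (2 * n))) /\
  prob_T_gt a (c1v eps) asg ((1 + eps) * / (2 * a) * INR (2 * n) * ln (INR (2 * n)))
   <= wv eps * exp (Cv a eps + 2) * exp (- (eps / 2) * ln (INR (2 * n))).
Proof.
move=> ha0 ha1 he hv hCN hN2.
set N := INR (2 * n) in hCN hN2 *.
have hN : 0 < N by lra.
have hn : (0 < n)%nat.
  case: (posnP n) => [n0|//].
  by move: hN2; rewrite /N n0 muln0 /=; lra.
have [hd1 hd2] := dlt_bounds he.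
set d := dlt eps in hd1 hd2.
set c1 := c1v eps; set w := wv eps; set C := Cv a eps.
have hc1 : c1 = 1 - d / 4 by [].
have hw : w = 2 / d by [].
have hw1 : 1 <= w.
  rewrite hw; apply: (Rmult_le_reg_r d) => //.
  rewrite /Rdiv Rmult_assoc Rinv_l; lra.
have hCp : 0 < C.
  rewrite /C /Cv; apply: Rdiv_pos_pos; first lra.
  apply: Rmult_lt_0_compat => //; apply: pow_lt; rewrite -/c1 hc1; lra.
set lam := 2 * a * (1 - d) / N.
have hlam0 : 0 <= lam.
  apply: Rmult_le_pos; first nra. apply: Rlt_le; exact: Rinv_0_lt_compat.
have hlam2 : lam <= a.
  apply: (Rmult_le_reg_r N) => //; rewrite /lam /Rdiv Rmult_assoc Rinv_l; nra.
set x := (1 + eps) * / (2 * a) * N * ln N.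
have hlnN : 0 < ln N by rewrite -ln_1; apply: ln_increasing; lra.
have hx : 0 <= x.
  rewrite /x; apply: Rmult_le_pos; last lra.
  apply: Rmult_le_pos; last lra.
  apply: Rmult_le_pos; first lra.
  apply: Rlt_le; apply: Rinv_0_lt_compat; lra.
have Hit := iterate (asg := asg) (lam := lam) hw1 (Rlt_le _ _ hCp) hn ha0 ha1 hv.
rewrite /prob_T_gt -/x.
set t := Z.to_nat (Int_part x).
split.
  rewrite /prob_not_done big_mkcond /=; apply: sumR_ge0 => S; case: ifP => _;
   [exact: mark_law_ge0| lra].
apply: (Rle_trans _ _ _ (@prob_le n a c1 w C asg t hw1 (Rlt_le _ _ hCp) hn ha0 ha1 hv)).
apply: Rle_trans.
  apply: Hit.
  - rewrite -/c1 hc1; lra.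
  - rewrite -/c1 hc1; lra.
  - rewrite /rho -/N -/c1; apply: L1_aux => //; first by rewrite hc1; lra.
    rewrite /lam; apply: (Rmult_le_reg_r N) => //.
    rewrite /Rdiv !Rmult_assoc Rinv_l; nra.
  - rewrite -/c1 hc1 hw; exact: L2a_aux.
  - rewrite -/c1 hc1; exact: L2b_aux.
  - lra.
have hz : (0 <= Int_part x)%Z.
  have [_ h2] := base_Int_part x.
  have : -1 < IZR (Int_part x) by lra.
  by move/lt_IZR; lia.
have ht : x - 1 <= INR t.
  rewrite /t INR_IZR_INZ Znat.Z2Nat.id //.
  have [_ h2] := base_Int_part x; lra.
have hlx : lam * x = (1 + eps / 2) * ln N.
  rewrite /lam /x /d /dlt; field; repeat split; lra.
have hP0 := Psi0_bound hn (ltac:(rewrite hc1; lra) : 0 < c1) hCp (ltac:(lra) : 0 <= w).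
apply: (Rle_trans _ (exp (INR t * - lam) * (w * N * exp C))).
  apply: Rmult_le_compat.
  - apply: pow_le; lra.
  - apply: Psi_ge0 => //; lra.
  - rewrite -exp_pow; apply: pow_incr; split; first lra.
    have := exp_ineq1_le (- lam); lra.
  - exact: hP0.
apply: (Rle_trans _ (exp (- ((1 + eps / 2) * ln N) + 2) * (w * N * exp C))).
  apply: Rmult_le_compat_r.
    apply: Rmult_le_pos; [nra| apply: Rlt_le; exact: exp_pos].
  apply: exp_le.
  have : lam * (x - 1) <= lam * INR t by apply: Rmult_le_compat_l.
  nra.
apply: Req_le.
have eN : exp (ln N) = N by rewrite exp_ln.
rewrite -{2}eN.
have aux : forall A L C0 w0, exp A * (w0 * exp L * exp C0) = w0 * exp (C0 + 2) * exp (A + L - 2).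
  move=> A L C0 w0.
  have -> : exp A * (w0 * exp L * exp C0) = w0 * exp (A + L + C0) by rewrite !exp_plus; ring.
  have -> : A + L + C0 = (C0 + 2) + (A + L - 2) by ring.
  rewrite exp_plus; ring.
rewrite aux; f_equal; f_equal; ring.
Qed.

Theorem mainTheorem7 :
  forall a : R, (0 < a)%R -> (a <= 1)%R ->
  forall eps : R, (0 < eps)%R ->
  exists c1 : R, (/2 < c1)%R /\ (c1 < 1)%R /\
    forall asg : forall n : nat, assignment n,
      (forall n : nat, valid_assignment c1 (asg n)) ->
      Un_cv (fun n : nat =>
               prob_T_gt a c1 (asg n)
                 ((1 + eps) * / (2 * a) * INR (2 * n) * ln (INR (2 * n)))%R)
            0%R.
Proof.
move=> a ha0 ha1 eps he.
have [hd1 hd2] := dlt_bounds he.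
exists (c1v eps); split; first by rewrite /c1v; lra.
split; first by rewrite /c1v; lra.
move=> asg hasg e hepos.
set K := wv eps * exp (Cv a eps + 2).
have hK : 0 < K.
  rewrite /K; apply: Rmult_lt_0_compat; last exact: exp_pos.
  rewrite /wv; apply: Rdiv_pos_pos; lra.
set c := eps / 2.
have hc : 0 < c by rewrite /c; lra.
set M := Rmax (Rmax (Cv a eps) 2) (exp (ln (K / e) / c)).
have [n0 hn0] := INR_unbounded M.
exists n0 => n hn.
have hnM : M < INR (2 * n).
  apply: (Rlt_le_trans _ _ _ hn0); apply: le_INR.
  apply/leP; apply: leq_trans (leq_pmull _ _); [exact/leP | by []].
have h1 : Cv a eps <= INR (2 * n).
  apply: Rlt_le; apply: Rle_lt_trans hnM; apply: Rle_trans (Rmax_l _ _) (Rmax_l _ _).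
have h2 : 2 <= INR (2 * n).
  apply: Rlt_le; apply: Rle_lt_trans hnM; apply: Rle_trans (Rmax_r _ _) (Rmax_l _ _).
have h3 : exp (ln (K / e) / c) < INR (2 * n).
  apply: Rle_lt_trans hnM; exact: Rmax_r.
have [hlo hhi] := final_bound ha0 ha1 he (hasg n) h1 h2.
rewrite /R_dist Rminus_0_r Rabs_right; last lra.
apply: Rle_lt_trans hhi _.
rewrite -/K -/c.
have hl : ln (K / e) / c < ln (INR (2 * n)).
  rewrite -{1}(ln_exp (ln (K / e) / c)); apply: ln_increasing => //; exact: exp_pos.
have : exp (- c * ln (INR (2 * n))) < e / K.
  have -> : e / K = exp (- (ln (K / e))).
    rewrite exp_Ropp exp_ln; last by apply: Rdiv_pos_pos.
    field; lra.
  apply: exp_increasing.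
  have : ln (K / e) < c * ln (INR (2 * n)).
    have := Rmult_lt_compat_l c _ _ hc hl.
    rewrite /Rdiv -Rmult_assoc (Rmult_comm c) Rmult_assoc Rinv_r; lra.
  lra.
move=> h.
have : K * exp (- c * ln (INR (2 * n))) < K * (e / K) by apply: Rmult_lt_compat_l.
have -> : K * (e / K) = e by field; lra.
done.
Qed.
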